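(* Let $k$ be a positive integer and let $w=A_1A_2\ldots A_n$ be a nonempty word over $\mathcal{A}_k$ (with $A_i\in\mathcal{A}_k$). Let $I_w:=A_1\oplus A_2\oplus\cdots\oplus A_n\in\mathcal{I}_k$. Then $[\![ I_w]\!]=A_1\boxplus A_2\boxplus\cdots\boxplus A_n$.
   Context: A $k$-interface graph is a tuple $(G,\phi,L,R)$ with $G$ a finite simple graph, $L,R\subseteq V(G)$, and $\phi:V(G)\to\{1,\dots,k\}$ injective on $L$ and on $R$. Two $k$-interface graphs $(G_1,\phi_1,L_1,R_1)$, $(G_2,\phi_2,L_2,R_2)$ are compatible if, with $J=\phi_1(R_1)\cap\phi_2(L_2)$, we have $V(G_1)\cap V(G_2)=\phi_1^{-1}(J)\cap R_1=\phi_2^{-1}(J)\cap L_2$ and $\phi_1,\phi_2$ agree on $V(G_1)\cap V(G_2)$ (no condition on edges). Their gluing is $(G_1\cup G_2,\phi,L_1,R_2)$ where $\phi$ extends $\phi_1$ and $\phi_2$ and $G_1\cup G_2=(V_1\cup V_2,E_1\cup E_2)$. Isomorphism of $k$-interface graphs is a graph isomorphism preserving labels $\phi$ and membership in $L$ and in $R$. $\mathcal{I}_k$ is the set of isomorphism classes; for $I_1,I_2\in\mathcal{I}_k$, $I_1\oplus I_2$ is the class of the gluing of compatible representatives of $I_1$ and $I_2$ (well defined), making $(\mathcal{I}_k,\oplus)$ a semigroup. The torso $\mathrm{torso}(G,X)$ is the graph on $X$ where distinct $x_1,x_2$ are adjacent iff $G$ has an $x_1$–$x_2$ path with no internal vertex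 in $X$. The abstraction $[\![\mathbb{G}]\!]$ of $\mathbb{G}=(G,\phi,L,R)$ is the isomorphism class of $(\mathrm{torso}(G,L\cup R),\phi|_{L\cup R},L,R)$; it depends only on the isomorphism class $I$ of $\mathbb{G}$, written $[\![ I]\!]$. $\mathcal{A}_k\subseteq\mathcal{I}_k$ is the set of all abstractions, and for $A_1,A_2\in\mathcal{A}_k$, $A_1\boxplus A_2:=[\![ A_1\oplus A_2]\!]$; $(\mathcal{A}_k,\boxplus)$ is a finite semigroup. *)

(* Defs.v *)
From mathcomp Require Import all_boot.
From mathcomp Require Import finmap.
Set Implicit Arguments. Unset Strict Implicit. Unset Printing Implicit Defensive.
Local Open Scope fset_scope.

Record igraph := IGraph {
  gV : {fset nat};
  gE : nat -> nat -> Prop;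
  gphi : nat -> nat;
  gL : {fset nat};
  gR : {fset nat}
}.

Definition wf (k : nat) (G : igraph) : Prop :=
  (forall x, x \in gL G -> x \in gV G) /\
  (forall x, x \in gR G -> x \in gV G) /\
  (forall x y, gE G x y -> x \in gV G /\ y \in gV G) /\
  (forall x y, gE G x y -> gE G y x) /\
  (forall x, ~ gE G x x) /\
  (forall x, x \in gV G -> 1 <= gphi G x <= k) /\
  (forall x y, x \in gL G -> y \in gL G -> gphi G x = gphi G y -> x = y) /\
  (forall x y, x \in gR G -> y \in gR G -> gphi G x = gphi G y -> x = y).

Definition iso (k : nat) (G1 G2 : igraph) : Prop :=
  wf k G1 /\ wf k G2 /\
  exists f : nat -> nat,
    (forall x, x \in gV G1 -> f x \in gV G2) /\
    (forall x y, x \in gV G1 -> y \in gV G1 -> f x = f y -> x = y) /\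
    (forall y, y \in gV G2 -> exists2 x, x \in gV G1 & f x = y) /\
    (forall x y, x \in gV G1 -> y \in gV G1 -> (gE G1 x y <-> gE G2 (f x) (f y))) /\
    (forall x, x \in gV G1 -> gphi G2 (f x) = gphi G1 x) /\
    (forall x, x \in gV G1 -> (x \in gL G1) = (f x \in gL G2)) /\
    (forall x, x \in gV G1 -> (x \in gR G1) = (f x \in gR G2)).

(* Compatibility of (G1,phi1,L1,R1) and (G2,phi2,L2,R2), with
   J = phi1(R1) \cap phi2(L2). *)
Definition inJ (G1 G2 : igraph) (j : nat) : Prop :=
  (exists2 y, y \in gR G1 & gphi G1 y = j) /\
  (exists2 z, z \in gL G2 & gphi G2 z = j).

Definition compatible (G1 G2 : igraph) : Prop :=
  (forall x, (x \in gV G1 /\ x \in gV G2) <-> (x \in gR G1 /\ inJ G1 G2 (gphi G1 x))) /\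
  (forall x, (x \in gV G1 /\ x \in gV G2) <-> (x \in gL G2 /\ inJ G1 G2 (gphi G2 x))) /\
  (forall x, x \in gV G1 -> x \in gV G2 -> gphi G1 x = gphi G2 x).

Definition glue (G1 G2 : igraph) : igraph :=
  IGraph (gV G1 `|` gV G2) (fun x y => gE G1 x y \/ gE G2 x y)
         (fun x => if x \in gV G1 then gphi G1 x else gphi G2 x)
         (gL G1) (gR G2).

(* x = v_0, v_1, ..., v_m, y is a walk along edges of E, where
   p = [:: v_1; ...; v_m] lists the internal vertices. *)
Fixpoint walk (E : nat -> nat -> Prop) (x : nat) (p : seq nat) (y : nat) : Prop :=
  match p with
  | [::] => E x y
  | v :: p' => E x v /\ walk E v p' y
  end.

Definition torso_adj (G : igraph) (X : {fset nat}) (x1 x2 : nat) : Prop :=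
  x1 \in X /\ x2 \in X /\ x1 <> x2 /\
  exists p : seq nat, walk (gE G) x1 p x2 /\ all (fun v => v \notin X) p.

Definition abstraction (G : igraph) : igraph :=
  IGraph (gL G `|` gR G) (torso_adj G (gL G `|` gR G)) (gphi G) (gL G) (gR G).

(* Isomorphism classes, represented as predicates on interface graphs. *)
Definition iclass := igraph -> Prop.

Definition cls (k : nat) (G : igraph) : iclass := fun H => iso k G H.

Definition in_I (k : nat) (C : iclass) : Prop := exists2 G, wf k G & C = cls k G.

Definition oplus (k : nat) (C1 C2 : iclass) : iclass := fun H =>
  exists G1 G2, [/\ C1 G1, C2 G2, compatible G1 G2 & iso k (glue G1 G2) H].

Definition abs (k : nat) (C : iclass) : iclass := fun H =>
  exists2 G, C G & iso k (abstraction G) H.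

Definition in_A (k : nat) (A : iclass) : Prop := exists2 I, in_I k I & A = abs k I.

Definition boxplus (k : nat) (A1 A2 : iclass) : iclass := abs k (oplus k A1 A2).

Fixpoint all_letters (P : iclass -> Prop) (w : seq iclass) : Prop :=
  match w with [::] => True | a :: w' => P a /\ all_letters P w' end.

(* Main.v *)
Require Import Defs.
From mathcomp Require Import all_boot.
From mathcomp Require Import finmap.
From Stdlib Require Import FunctionalExtensionality PropExtensionality.
Set Implicit Arguments. Unset Strict Implicit. Unset Printing Implicit Defensive.
Local Open Scope fset_scope.

Lemma walk_cat E p q x m y :
  walk E x (p ++ m :: q) y <-> walk E x p m /\ walk E m q y.
Proof.
elim: p x => [|a p IH] x /=; first by tauto.
rewrite IH; tauto.
Qed.

Lemma walk_mono (E E' : nat -> nat -> Prop) p x y :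
  (forall a b, E a b -> E' a b) -> walk E x p y -> walk E' x p y.
Proof.
move=> hE; elim: p x => [|a p IH] x /=; first exact: hE.
by case=> h1 h2; split; [apply: hE | apply: IH].
Qed.

Lemma walk_map (E E' : nat -> nat -> Prop) f p x y :
  (forall a b, E a b -> E' (f a) (f b)) -> walk E x p y -> walk E' (f x) (map f p) (f y).
Proof.
move=> hE; elim: p x => [|a p IH] x /=; first exact: hE.
by case=> h1 h2; split; [apply: hE | apply: IH].
Qed.

Lemma walk_in (E : nat -> nat -> Prop) (P : nat -> Prop) p x y :
  (forall a b, E a b -> P a /\ P b) -> walk E x p y ->
  [/\ P x, P y & forall v, v \in p -> P v].
Proof.
move=> hE; elim: p x => [|a p IH] x /=.
  by move=> /hE [h1 h2]; split.
case=> /hE [h1 h2] /IH [h3 h4 h5]; split => // v; rewrite inE => /orP [/eqP ->|] //.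
exact: h5.
Qed.

Lemma walk_rev (E : nat -> nat -> Prop) p x y :
  (forall a b, E a b -> E b a) -> walk E x p y -> walk E y (rev p) x.
Proof.
move=> hE; elim: p x => [|a p IH] x /=; first exact: hE.
case=> h1 /IH h2; rewrite rev_cons -cats1; apply/walk_cat; split => //=.
exact: hE.
Qed.

Definition isof (G1 G2 : igraph) (f : nat -> nat) : Prop :=
    (forall x, x \in gV G1 -> f x \in gV G2) /\
    (forall x y, x \in gV G1 -> y \in gV G1 -> f x = f y -> x = y) /\
    (forall y, y \in gV G2 -> exists2 x, x \in gV G1 & f x = y) /\
    (forall x y, x \in gV G1 -> y \in gV G1 -> (gE G1 x y <-> gE G2 (f x) (f y))) /\
    (forall x, x \in gV G1 -> gphi G2 (f x) = gphi G1 x) /\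
    (forall x, x \in gV G1 -> (x \in gL G1) = (f x \in gL G2)) /\
    (forall x, x \in gV G1 -> (x \in gR G1) = (f x \in gR G2)).

Lemma isoE k G1 G2 : iso k G1 G2 = (wf k G1 /\ wf k G2 /\ exists f, isof G1 G2 f).
Proof. by []. Qed.

Lemma iso_wf1 k G1 G2 : iso k G1 G2 -> wf k G1. Proof. by case. Qed.
Lemma iso_wf2 k G1 G2 : iso k G1 G2 -> wf k G2. Proof. by case=> _ []. Qed.

Lemma iso_refl k G : wf k G -> iso k G G.
Proof.
move=> w; split => //; split => //; exists id.
do 6 (split; first by move=> *; eauto).
by [].
Qed.

Lemma iso_trans k G1 G2 G3 : iso k G1 G2 -> iso k G2 G3 -> iso k G1 G3.
Proof.
move=> [w1 [w2 [f [f1 [f2 [f3 [f4 [f5 [f6 f7]]]]]]]]].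
move=> [_ [w3 [g [g1 [g2 [g3 [g4 [g5 [g6 g7]]]]]]]]].
split => //; split => //; exists (g \o f) => /=.
split; first by move=> x hx; apply: g1; apply: f1.
split; first by move=> x y hx hy /g2 h; apply: f2 => //; apply: h; apply: f1.
split; first by move=> y /g3 [x2 /f3 [x1 h1 <-] <-]; exists x1.
split; first by move=> x y hx hy; rewrite f4 // g4 //; apply: f1.
split; first by move=> x hx; rewrite g5 ?f5 //; apply: f1.
split; first by move=> x hx; rewrite f6 // g6 //; apply: f1.
by move=> x hx; rewrite f7 // g7 //; apply: f1.
Qed.

Definition eqg (G G' : igraph) : Prop :=
 (forall x, (x \in gV G) = (x \in gV G')) /\ (forall x y, gE G x y <-> gE G' x y) /\
 (forall x, x \in gV G -> gphi G x = gphi G' x) /\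
 (forall x, (x \in gL G) = (x \in gL G')) /\ (forall x, (x \in gR G) = (x \in gR G')).

Lemma eqg_refl G : eqg G G.
Proof. by split => //; split => //. Qed.

Lemma eqg_sym G G' : eqg G G' -> eqg G' G.
Proof.
move=> [h1 [h2 [h3 [h4 h5]]]].
split; first by move=> x; rewrite h1.
split; first by move=> x y; rewrite h2.
split; first by move=> x hx; rewrite h3 // h1.
by split=> x; [rewrite h4 | rewrite h5].
Qed.

Lemma eqg_trans G1 G2 G3 : eqg G1 G2 -> eqg G2 G3 -> eqg G1 G3.
Proof.
move=> [h1 [h2 [h3 [h4 h5]]]] [g1 [g2 [g3 [g4 g5]]]].
split; first by move=> x; rewrite h1 g1.
split; first by move=> x y; rewrite h2 g2.
split; first by move=> x hx; rewrite h3 // g3 // -h1.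
by split => x; [rewrite h4 g4 | rewrite h5 g5].
Qed.

Lemma wf_eqg k G G' : eqg G G' -> wf k G -> wf k G'.
Proof.
move=> [h1 [h2 [h3 [h4 h5]]]] [w1 [w2 [w3 [w4 [w5 [w6 [w7 w8]]]]]]].
split; first by move=> x; rewrite -h4 -h1; apply: w1.
split; first by move=> x; rewrite -h5 -h1; apply: w2.
split; first by move=> x y /h2 /w3; rewrite !h1.
split; first by move=> x y /h2 /w4 /h2.
split; first by move=> x /h2 /w5.
split; first by move=> x hx; rewrite -h3 ?h1 //; apply: w6; rewrite h1.
split; first by move=> x y; rewrite -!h4 => hx hy;
  rewrite -(h3 x (w1 _ hx)) -(h3 y (w1 _ hy)); apply: w7.
by move=> x y; rewrite -!h5 => hx hy;
  rewrite -(h3 x (w2 _ hx)) -(h3 y (w2 _ hy)); apply: w8.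
Qed.

Lemma eqg_iso k G G' : eqg G G' -> wf k G -> iso k G G'.
Proof.
move=> e w; split => //; split; first exact: wf_eqg e w.
case: e => [h1 [h2 [h3 [h4 h5]]]].
exists id => /=.
split; first by move=> x; rewrite h1.
split; first by [].
split; first by move=> y; rewrite -h1 => hy; exists y.
split; first by move=> x y _ _; apply: h2.
split; first by move=> x /h3.
by split=> x _; [apply: h4 | apply: h5].
Qed.

Lemma allP' (P : pred nat) (p : seq nat) : all P p <-> (forall v, v \in p -> P v).
Proof. by split => [/allP|?]; [|apply/allP]. Qed.

Lemma torso_ext G G' X X' x y :
  (forall v, (v \in X) = (v \in X')) -> (forall a b, gE G a b <-> gE G' a b) ->
  torso_adj G X x y <-> torso_adj G' X' x y.
Proof.
move=> hX hE; rewrite /torso_adj !hX.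
have hall : forall p : seq nat, all (fun v => v \notin X) p = all (fun v => v \notin X') p.
  by move=> p; apply: eq_all => v; rewrite hX.
split; move=> [h1 [h2 [h3 [p [hw ha]]]]]; do 3 (split => //); exists p.
  by rewrite -hall; split => //; apply: walk_mono hw => a b /hE.
by rewrite hall; split => //; apply: walk_mono hw => a b /hE.
Qed.

Lemma wf_abstraction k G : wf k G -> wf k (abstraction G).
Proof.
move=> [w1 [w2 [w3 [w4 [w5 [w6 [w7 w8]]]]]]]; rewrite /abstraction /=.
split; first by move=> x hx; rewrite in_fsetU hx.
split; first by move=> x hx; rewrite in_fsetU hx orbT.
split; first by move=> x y [h1 [h2 _]].
split.
  move=> x y [h1 [h2 [h3 [p [hw ha]]]]]; do 2 (split => //); split; first by move=> e; apply: h3.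
  exists (rev p); split; last by rewrite all_rev.
  by apply: walk_rev hw; apply: w4.
split; first by move=> x [_ [_ [h _]]].
split; first by move=> x; rewrite in_fsetU => /orP [/w1|/w2]; apply: w6.
by split.
Qed.

Lemma wf_LRV k G x : wf k G -> x \in gL G `|` gR G -> x \in gV G.
Proof. by move=> [w1 [w2 _]]; rewrite in_fsetU => /orP [/w1|/w2]. Qed.

Lemma abstraction_eqg k G G' : wf k G -> eqg G G' -> eqg (abstraction G) (abstraction G').
Proof.
move=> w [h1 [h2 [h3 [h4 h5]]]].
have hX : forall v, (v \in gL G `|` gR G) = (v \in gL G' `|` gR G').
  by move=> v; rewrite !in_fsetU h4 h5.
split; first exact: hX.
split; first by move=> x y; apply: torso_ext.
split; first by move=> x /= hx; apply: h3; exact: wf_LRV w hx.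
by split => x /=; [apply: h4|apply: h5].
Qed.

Lemma glue_eqg G1 G1' G2 G2' : eqg G1 G1' -> eqg G2 G2' -> eqg (glue G1 G2) (glue G1' G2').
Proof.
move=> [h1 [h2 [h3 [h4 h5]]]] [g1 [g2 [g3 [g4 g5]]]]; rewrite /glue /=.
split; first by move=> x; rewrite !in_fsetU h1 g1.
split; first by move=> x y /=; split => -[h|h];
  [left; apply/h2 | right; apply/g2 | left; apply/h2 | right; apply/g2]; exact h.
split; last by split.
move=> x /=; rewrite in_fsetU -h1; case: ifP => [hx _|hx /= hx2]; first exact: h3.
exact: g3.
Qed.

Lemma torso_full k G X u v : wf k G -> (forall x, (x \in gV G) = (x \in X)) ->
  torso_adj G X u v <-> gE G u v.
Proof.
move=> [w1 [w2 [w3 [w4 [w5 _]]]]] hX; split.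
  move=> [h1 [h2 [h3 [[|a p] [hw hall]]]]] //=.
  move: hw hall => /= [/w3 [_ ha] _] /andP [hna _].
  by move: hna; rewrite -hX ha.
move=> e; have [a b] := w3 _ _ e; move: a b; rewrite !hX => a b.
do 2 (split => //); split; first by move=> ee; subst; apply: (w5 v).
by exists [::].
Qed.

Lemma abstraction_idem k G : wf k G -> eqg (abstraction (abstraction G)) (abstraction G).
Proof.
move=> w; have wa := wf_abstraction w.
split; first by [].
split; first by move=> x y; apply: (torso_full _ _ wa).
by split.
Qed.

Lemma memX k G G' f x : wf k G -> isof G G' f -> x \in gV G ->
  (x \in gL G `|` gR G) = (f x \in gL G' `|` gR G').
Proof.
move=> w [f1 [f2 [f3 [f4 [f5 [f6 f7]]]]]] hx; by rewrite !in_fsetU f6 // f7.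
Qed.

Lemma torso_iso k G G' f x y : wf k G -> wf k G' -> isof G G' f ->
  x \in gV G -> y \in gV G ->
  torso_adj G (gL G `|` gR G) x y <-> torso_adj G' (gL G' `|` gR G') (f x) (f y).
Proof.
move=> w w' hf hx hy; have hm := memX w hf.
have [f1 [f2 [f3 [f4 [f5 [f6 f7]]]]]] := hf.
have [w1 [w2 [w3 [w4 [w5 _]]]]] := w.
have [w1' [w2' [w3' [w4' [w5' _]]]]] := w'.
rewrite /torso_adj -!hm //; split.
  move=> [h1 [h2 [h3 [p [hw ha]]]]]; do 2 (split => //); split.
    by move=> /f2 e; apply: h3; apply: e.
  have [_ _ hin] := walk_in w3 hw.
  exists (map f p); split.
    by apply: walk_map hw => a b e; have [ha' hb'] := w3 _ _ e; rewrite -f4.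
  rewrite all_map; apply/allP' => v hv /=; rewrite -hm; last by apply: hin.
  by move/allP': ha => /(_ v hv).
move=> [h1 [h2 [h3 [p' [hw ha]]]]]; do 2 (split => //); split; first by move=> e; apply: h3; rewrite e.
elim: p' x hx {h1 h3} hw ha => [|v' p' IH] x hx /=.
  by move=> e _; exists [::]; split => //=; rewrite f4.
move=> [e hw] /andP [hv' ha].
have [_ hv1] := w3' _ _ e; have [v hv ev] := f3 _ hv1; subst v'.
have [p [hw2 ha2]] := IH v hv hw ha.
exists (v :: p); split => /=; first by split => //; rewrite f4.
by rewrite ha2 andbT hm.
Qed.

Lemma abs_iso k G G' : iso k G G' -> iso k (abstraction G) (abstraction G').
Proof.
move=> [w [w' [f hf]]]; split; first exact: wf_abstraction.
split; first exact: wf_abstraction.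
exists f; have hm := memX w hf.
have [f1 [f2 [f3 [f4 [f5 [f6 f7]]]]]] := hf.
rewrite /abstraction /=.
split; first by move=> x hx; rewrite -hm //; exact: wf_LRV w hx.
split; first by move=> x y hx hy; apply: f2; [exact: wf_LRV w hx|exact: wf_LRV w hy].
split; first by move=> y hy; have [x hx e] := f3 _ (wf_LRV w' hy);
  exists x => //; rewrite hm // e.
split; first by move=> x y hx hy; apply: (torso_iso w w' hf); [exact: wf_LRV w hx|exact: wf_LRV w hy].
split; first by move=> x hx; apply: f5; exact: wf_LRV w hx.
by split => x hx; [apply: f6|apply: f7]; exact: wf_LRV w hx.
Qed.

Lemma side G1 G2 x : compatible G1 G2 -> x \in gV G1 -> x \in gV G2 ->
  x \in gR G1 /\ x \in gL G2.
Proof.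
move=> [c1 [c2 c3]] h1 h2; split; first by have [] := (proj1 (c1 x)) (conj h1 h2).
by have [] := (proj1 (c2 x)) (conj h1 h2).
Qed.

Lemma glue_phi2 G1 G2 x : compatible G1 G2 -> x \in gV G2 -> gphi (glue G1 G2) x = gphi G2 x.
Proof.
move=> C h2 /=; case: ifP => // h1; by case: C => [_ [_ c3]]; apply: c3.
Qed.

Lemma wf_glue k G1 G2 : compatible G1 G2 -> wf k G1 -> wf k G2 -> wf k (glue G1 G2).
Proof.
move=> C w1 w2; have w1' := w1; have w2' := w2.
move: w1 w2 => [a1 [b1 [c1 [d1 [e1 [f1 [g1 h1]]]]]]] [a2 [b2 [c2 [d2 [e2 [f2 [g2 h2]]]]]]].
split; first by move=> x /a1 hx /=; rewrite in_fsetU hx.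
split; first by move=> x /b2 hx /=; rewrite in_fsetU hx orbT.
split; first by move=> x y /= [/c1|/c2] [hx hy]; rewrite !in_fsetU hx hy ?orbT.
split; first by move=> x y /= [/d1|/d2]; auto.
split; first by move=> x /= [/e1|/e2].
split; first by move=> x /=; rewrite in_fsetU; case: ifP => [hx _|_ /= hx]; auto.
split; first by move=> x y /= hx hy; rewrite (a1 _ hx) (a1 _ hy); apply: g1.
move=> x y /= hx hy.
have := glue_phi2 C (b2 _ hx); have := glue_phi2 C (b2 _ hy); rewrite /= => -> ->.
exact: h2.
Qed.

Definition Y (G : igraph) : {fset nat} := gL G `|` gR G.
Definition YY G1 G2 v := (v \in Y G1) || (v \in Y G2).
Definition Gs (G1 G2 : igraph) (i : bool) := if i then G1 else G2.

Lemma compat_abs k G1 G2 : compatible G1 G2 -> wf k G1 -> wf k G2 ->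
  compatible (abstraction G1) (abstraction G2).
Proof.
move=> C w1 w2; have C' := C; move: C' => [c1 [c2 c3]].
rewrite /compatible /abstraction /=.
split.
  move=> x; split.
    by move=> [/(wf_LRV w1) h1 /(wf_LRV w2) h2]; apply/c1.
  move=> /c1 [h1 h2]; have [s1 s2] := side C h1 h2.
  by rewrite !in_fsetU s1 s2 orbT.
split.
  move=> x; split.
    by move=> [/(wf_LRV w1) h1 /(wf_LRV w2) h2]; apply/c2.
  move=> /c2 [h1 h2]; have [s1 s2] := side C h1 h2.
  by rewrite !in_fsetU s1 s2 orbT.
by move=> x /(wf_LRV w1) h1 /(wf_LRV w2) h2; apply: c3.
Qed.

Lemma YinYY G1 G2 i a : a \in Y (Gs G1 G2 i) -> YY G1 G2 a.
Proof. by rewrite /YY; case: i => /= ->; rewrite ?orbT. Qed.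

Lemma notYY G1 G2 i z : ~~ YY G1 G2 z -> z \notin Y (Gs G1 G2 i).
Proof. by rewrite /YY negb_or => /andP [n1 n2]; case: i. Qed.

Lemma wfs k G1 G2 i : wf k G1 -> wf k G2 -> wf k (Gs G1 G2 i).
Proof. by case: i. Qed.

Lemma Yside k G1 G2 i v : compatible G1 G2 -> wf k G1 -> wf k G2 ->
  v \in gV (Gs G1 G2 i) -> YY G1 G2 v -> v \in Y (Gs G1 G2 i).
Proof.
move=> C w1 w2; case: i => /= hv /orP [hy|hy] //.
- by have [s1 _] := side C hv (wf_LRV w2 hy); rewrite /Y in_fsetU s1 orbT.
- by have [_ s2] := side C (wf_LRV w1 hy) hv; rewrite /Y in_fsetU s2.
Qed.

Lemma Ydiff G1 G2 i j v : compatible G1 G2 -> v \in gV (Gs G1 G2 i) -> v \in gV (Gs G1 G2 j) ->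
  i = j \/ YY G1 G2 v.
Proof.
move=> C; case: i; case: j => /= h1 h2; try by left.
- by right; have [s1 _] := side C h1 h2; rewrite /YY /Y in_fsetU s1 orbT.
- by right; have [s1 _] := side C h2 h1; rewrite /YY /Y in_fsetU s1 orbT.
Qed.

Definition EH G1 G2 (u w : nat) : Prop :=
  torso_adj G1 (Y G1) u w \/ torso_adj G2 (Y G2) u w.
Definition XX G1 G2 : {fset nat} := gL G1 `|` gR G2.
Definition RH G1 G2 u w := u = w \/ exists q, walk (EH G1 G2) u q w /\ all (fun v => v \notin XX G1 G2) q.

Lemma RH_trans G1 G2 u m w : RH G1 G2 u m -> RH G1 G2 m w -> (u = m \/ m \notin XX G1 G2) -> RH G1 G2 u w.
Proof.
case=> [-> //|[q1 [h1 a1]]].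
case=> [<-|[q2 [h2 a2]]]; first by move=> _; right; exists q1.
case=> [->|hm]; first by right; exists q2.
right; exists (q1 ++ m :: q2); split; first by apply/walk_cat.
by rewrite all_cat /= hm a1 a2.
Qed.

Lemma close k G1 G2 i a r v : compatible G1 G2 -> wf k G1 -> wf k G2 ->
  a \in Y (Gs G1 G2 i) -> walk (gE (Gs G1 G2 i)) a r v -> all (fun z => ~~ YY G1 G2 z) r ->
  YY G1 G2 v -> RH G1 G2 a v.
Proof.
move=> C w1 w2 ha hw hr hv.
have [_ [_ [w3 _]]] := wfs i w1 w2.
have [_ hvV _] := walk_in (P := fun z => z \in gV (Gs G1 G2 i)) w3 hw.
have hvY := Yside C w1 w2 hvV hv.
case: (eqVneq a v) => [->|ne]; first by left.
right; exists [::]; split => //=.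
have T : torso_adj (Gs G1 G2 i) (Y (Gs G1 G2 i)) a v.
  do 2 (split => //); split; first by apply/eqP.
  exists r; split => //; apply/allP' => z hz; move/allP': hr => /(_ z hz).
  exact: notYY.
by move: T; case: i {ha hw hvV hvY w3} => /= T; [left|right].
Qed.

Lemma step k G1 G2 i a u v j0 : compatible G1 G2 -> wf k G1 -> wf k G2 ->
  a \in Y (Gs G1 G2 i) ->
  (a = u \/ (~~ YY G1 G2 u /\ exists r, walk (gE (Gs G1 G2 i)) a r u /\ all (fun z => ~~ YY G1 G2 z) r)) ->
  gE (Gs G1 G2 j0) u v ->
  exists j r, [/\ a \in Y (Gs G1 G2 j), walk (gE (Gs G1 G2 j)) a r v & all (fun z => ~~ YY G1 G2 z) r].
Proof.
move=> C w1 w2 ha [<-| [nu [r [hw hr]]]] e.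
  exists j0, [::]; split => //.
  have [_ [_ [w3 _]]] := wfs j0 w1 w2.
  have [haV _] := w3 _ _ e.
  exact: Yside C w1 w2 haV (YinYY ha).
have [_ [_ [w3 _]]] := wfs i w1 w2.
have [_ huV _] := walk_in (P := fun z => z \in gV (Gs G1 G2 i)) w3 hw.
have [_ [_ [w3' _]]] := wfs j0 w1 w2.
have [huV' _] := w3' _ _ e.
case: (Ydiff C huV huV') => [eij|hyy]; last by rewrite hyy in nu.
subst j0; exists i, (r ++ [:: u]); split => //; first by apply/walk_cat.
by rewrite all_cat /= hr nu.
Qed.

Lemma G_to_H k G1 G2 x y : compatible G1 G2 -> wf k G1 -> wf k G2 -> YY G1 G2 y ->
  forall p u a i, a \in Y (Gs G1 G2 i) ->
  (a = u \/ (~~ YY G1 G2 u /\ exists r, walk (gE (Gs G1 G2 i)) a r u /\ all (fun z => ~~ YY G1 G2 z) r)) ->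
  RH G1 G2 x a -> (x = a \/ a \notin XX G1 G2) ->
  walk (gE (glue G1 G2)) u p y -> all (fun z => z \notin XX G1 G2) p -> RH G1 G2 x y.
Proof.
move=> C w1 w2 hy; elim=> [|v p IH] u a i ha hst hxa hax /=.
  move=> e _.
  have [j0 e'] : exists j0, gE (Gs G1 G2 j0) u y by case: e => e; [exists true|exists false].
  have [j [r [haj hw hr]]] := step C w1 w2 ha hst e'.
  apply: RH_trans hxa _ hax; exact: close C w1 w2 haj hw hr hy.
move=> [e hw] /andP [hv hp].
have [j0 e'] : exists j0, gE (Gs G1 G2 j0) u v by case: e => e; [exists true|exists false].
have [j [r [haj hwr hr]]] := step C w1 w2 ha hst e'.
case hvY: (YY G1 G2 v).
  have hxv : RH G1 G2 x v := RH_trans hxa (close C w1 w2 haj hwr hr hvY) hax.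
  have [iv hiv] : exists iv, v \in Y (Gs G1 G2 iv).
    by move: hvY; rewrite /YY => /orP [h|h]; [exists true|exists false].
  exact: (IH v v iv hiv (or_introl erefl) hxv (or_intror hv) hw hp).
apply: (IH v a j haj _ hxa hax hw hp); right; split; first by rewrite hvY.
by exists r.
Qed.

Lemma torso_GH k G1 G2 u w : compatible G1 G2 -> wf k G1 -> wf k G2 ->
  torso_adj (glue G1 G2) (XX G1 G2) u w -> torso_adj (glue (abstraction G1) (abstraction G2)) (XX G1 G2) u w.
Proof.
move=> C w1 w2 [hu [hw [ne [p [hp ha]]]]]; do 3 (split => //).
have XY : forall z, z \in XX G1 G2 -> YY G1 G2 z.
  by move=> z; rewrite /XX /YY /Y !in_fsetU => /orP [->|->] //; rewrite ?orbT.
have [iu hiu] : exists iu, u \in Y (Gs G1 G2 iu).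
  by move: (XY _ hu); rewrite /YY => /orP [h|h]; [exists true|exists false].
have := G_to_H (x := u) C w1 w2 (XY _ hw) hiu (or_introl erefl) (or_introl erefl) (or_introl erefl) hp ha.
by case=> [/ne|].
Qed.

Lemma edge_HG k G1 G2 u w : compatible G1 G2 -> wf k G1 -> wf k G2 ->
  EH G1 G2 u w -> exists r, walk (gE (glue G1 G2)) u r w /\ all (fun z => z \notin XX G1 G2) r.
Proof.
move=> C w1 w2.
have [a1 [b1 [c1 _]]] := w1; have [a2 [b2 [c2 _]]] := w2.
case=> [[_ [_ [_ [r [hr ha]]]]]|[_ [_ [_ [r [hr ha]]]]]]; exists r.
- have [_ _ hin] := walk_in (P := fun z => z \in gV G1) c1 hr.
  split; first by apply: walk_mono hr => a b e; left.
  apply/allP' => z hz; move/allP': ha => /(_ z hz) hn.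
  rewrite /XX in_fsetU; apply/negP => /orP [hl|hr2].
  + by move: hn; rewrite /Y in_fsetU hl.
  + have [s1 _] := side C (hin _ hz) (b2 _ hr2).
    by move: hn; rewrite /Y in_fsetU s1 orbT.
- have [_ _ hin] := walk_in (P := fun z => z \in gV G2) c2 hr.
  split; first by apply: walk_mono hr => a b e; right.
  apply/allP' => z hz; move/allP': ha => /(_ z hz) hn.
  rewrite /XX in_fsetU; apply/negP => /orP [hl|hr2].
  + have [_ s2] := side C (a1 _ hl) (hin _ hz).
    by move: hn; rewrite /Y in_fsetU s2.
  + by move: hn; rewrite /Y in_fsetU hr2 orbT.
Qed.

Lemma walk_HG k G1 G2 : compatible G1 G2 -> wf k G1 -> wf k G2 -> forall p u w,
  walk (EH G1 G2) u p w -> all (fun z => z \notin XX G1 G2) p ->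
  exists q, walk (gE (glue G1 G2)) u q w /\ all (fun z => z \notin XX G1 G2) q.
Proof.
move=> C w1 w2; elim=> [|v p IH] u w /=; first by move=> e _; exact: edge_HG C w1 w2 e.
move=> [e hw] /andP [hv hp].
have [r [hr ar]] := edge_HG C w1 w2 e.
have [q [hq aq]] := IH v w hw hp.
exists (r ++ v :: q); split; first by apply/walk_cat.
by rewrite all_cat /= ar hv aq.
Qed.

Lemma torso_HG k G1 G2 u w : compatible G1 G2 -> wf k G1 -> wf k G2 ->
  torso_adj (glue (abstraction G1) (abstraction G2)) (XX G1 G2) u w -> torso_adj (glue G1 G2) (XX G1 G2) u w.
Proof.
move=> C w1 w2 [hu [hw [ne [p [hp ha]]]]]; do 3 (split => //).
exact: walk_HG C w1 w2 p u w hp ha.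
Qed.

Lemma key_eqg k G1 G2 : compatible G1 G2 -> wf k G1 -> wf k G2 ->
  eqg (abstraction (glue G1 G2)) (abstraction (glue (abstraction G1) (abstraction G2))).
Proof.
move=> C w1 w2.
split; first by [].
split; first by move=> u w; split; [apply: torso_GH C w1 w2 | apply: torso_HG C w1 w2].
split; last by split => x.
have [a1 [b1 _]] := w1; have [a2 [b2 _]] := w2.
move=> x /=; rewrite in_fsetU => hx.
case: ifP => h1; case: ifP => h2 //.
- exfalso; move: h2; rewrite in_fsetU; case/orP: hx => [hl|hr].
  + by rewrite hl.
  + by have [s1 _] := side C h1 (b2 _ hr); rewrite s1 orbT.
- by move: h1; rewrite (wf_LRV w1 h2).
Qed.

From mathcomp Require Import zify.

Lemma bound (s : seq nat) : exists N, forall x, x \in s -> x < N.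
Proof.
elim: s => [|a s [N hN]]; first by exists 0.
exists (a.+1 + N)%N => x; rewrite inE => /orP [/eqP ->|/hN]; lia.
Qed.

Definition rename (h psi : nat -> nat) (G : igraph) : igraph :=
  IGraph (h @` gV G)
    (fun x y => exists a b, [/\ a \in gV G, b \in gV G, h a = x, h b = y & gE G a b])
    psi (h @` gL G) (h @` gR G).

Lemma mem_img_inj (h : nat -> nat) (V S : {fset nat}) x :
  (forall x y, x \in V -> y \in V -> h x = h y -> x = y) ->
  (forall z, z \in S -> z \in V) -> x \in V -> (h x \in h @` S) = (x \in S).
Proof.
move=> hi hS hx; apply/imfsetP/idP => [[a ha e]|hxS]; last by exists x.
by rewrite (hi _ _ hx (hS _ ha) e).
Qed.

Lemma in_img (h : nat -> nat) (S : {fset nat}) x : x \in S -> h x \in h @` S.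
Proof. by move=> hx; apply/imfsetP; exists x. Qed.

Lemma rename_iso k h psi G : wf k G ->
  (forall x y, x \in gV G -> y \in gV G -> h x = h y -> x = y) ->
  (forall x, x \in gV G -> psi (h x) = gphi G x) ->
  wf k (rename h psi G) /\ isof G (rename h psi G) h.
Proof.
move=> w hi hp; have [w1 [w2 [w3 [w4 [w5 [w6 [w7 w8]]]]]]] := w.
split.
  rewrite /rename /=.
  split; first by move=> y /imfsetP [a ha ->]; apply: in_img; apply: w1.
  split; first by move=> y /imfsetP [a ha ->]; apply: in_img; apply: w2.
  split; first by move=> x y [a [b [ha hb <- <- _]]]; split; apply: in_img.
  split; first by move=> x y [a [b [ha hb ea eb e]]]; exists b, a; split => //; apply: w4.
  split; first by move=> x [a [b [ha hb ea eb e]]]; subst x;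
    have eab := hi _ _ hb ha eb; subst b; apply: (w5 a).
  split; first by move=> y /imfsetP [a ha ->] /=; rewrite hp //; apply: w6.
  split; first by move=> y1 y2 /imfsetP [a ha ->] /imfsetP [b hb ->];
    rewrite /= !hp ?w1 // => /w7 -> //.
  by move=> y1 y2 /imfsetP [a ha ->] /imfsetP [b hb ->];
    rewrite /= !hp ?w2 // => /w8 -> //.
rewrite /rename /=.
split; first by move=> x hx; apply: in_img.
split; first exact: hi.
split; first by move=> y /imfsetP [a ha ->]; exists a.
split.
  move=> x y hx hy; split; first by move=> e; exists x, y.
  by move=> [a [b [ha hb ea eb e]]]; rewrite -(hi _ _ ha hx ea) -(hi _ _ hb hy eb).
split; first exact: hp.
by split => x hx /=; [rewrite (@mem_img_inj h (gV G) (gL G) x hi w1 hx)|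
  rewrite (@mem_img_inj h (gV G) (gR G) x hi w2 hx)].
Qed.

Lemma rename_exists k G1 G1' G2 : wf k G1 -> iso k (abstraction G1) G1' -> wf k G2 ->
  compatible G1' G2 ->
  exists G1'', [/\ iso k G1 G1'', compatible G1'' G2 & eqg (abstraction G1'') (abstraction G1')].
Proof.
move=> w1 [wa [w1' [g hg]]] w2 C.
have [g1 [g2 [g3 [g4 [g5 [g6 g7]]]]]] := hg.
rewrite /abstraction /= in g1 g2 g3 g4 g5 g6 g7.
have [a1 [b1 _]] := w1.
have [a1' [b1' [c1' _]]] := w1'.
have [N hN] := bound ((gV G1' : seq nat) ++ (gV G2 : seq nat)).
have hN1 : forall x, x \in gV G1' -> x < N.
  by move=> x hx; apply: hN; rewrite mem_cat; apply/orP; left.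
have hN2 : forall x, x \in gV G2 -> x < N.
  by move=> x hx; apply: hN; rewrite mem_cat; apply/orP; right.
pose h := fun x => if x \in gL G1 `|` gR G1 then g x else (N + x)%N.
pose psi := fun y => if (N <= y)%N then gphi G1 (y - N)%N else gphi G1' y.
have hinj : forall x y, x \in gV G1 -> y \in gV G1 -> h x = h y -> x = y.
  move=> x y hx hy; rewrite /h; case: ifP => ix; case: ifP => iy.
  - exact: g2.
  - by move=> e; have := hN1 _ (g1 _ ix); rewrite e; lia.
  - by move=> e; have := hN1 _ (g1 _ iy); rewrite -e; lia.
  - lia.
have hpsi : forall x, x \in gV G1 -> psi (h x) = gphi G1 x.
  move=> x hx; rewrite /psi /h; case ix: (x \in gL G1 `|` gR G1).
    have hl := hN1 _ (g1 _ ix); rewrite leqNgt hl /=; exact: g5.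
  have -> : (N <= N + x)%N by lia.
  by congr gphi; lia.
have [w1'' hf] := rename_iso w1 hinj hpsi.
set G1'' := rename h psi G1 in w1'' hf.
have hV'' : forall y, y \in gV G1'' -> y \in gV G1' \/ (N <= y)%N.
  move=> y /imfsetP [a ha ->]; rewrite /h; case: ifP => ia; first by left; apply: g1.
  by right; lia.
have hVsub : forall y, y \in gV G1' -> y \in gV G1''.
  move=> y /g3 [a ia <-]; apply/imfsetP; exists a; first exact: wf_LRV w1 ia.
  by rewrite /h ia.
have hL : forall y, (y \in gL G1'') = (y \in gL G1').
  move=> y; apply/imfsetP/idP => [[a ha ->]|hy].
    have ia : a \in gL G1 `|` gR G1 by rewrite in_fsetU ha.
    by rewrite /h ia -g6.
  have [a ia e] := g3 _ (a1' _ hy); exists a; last by rewrite /h ia.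
  by rewrite g6 // e.
have hR : forall y, (y \in gR G1'') = (y \in gR G1').
  move=> y; apply/imfsetP/idP => [[a ha ->]|hy].
    have ia : a \in gL G1 `|` gR G1 by rewrite in_fsetU ha orbT.
    by rewrite /h ia -g7.
  have [a ia e] := g3 _ (b1' _ hy); exists a; last by rewrite /h ia.
  by rewrite g7 // e.
have hpsi' : forall y, y \in gV G1' -> psi y = gphi G1' y.
  by move=> y /hN1 hy; rewrite /psi; case: leqP => //; lia.
have hVV : forall x, (x \in gV G1'' /\ x \in gV G2) <-> (x \in gV G1' /\ x \in gV G2).
  move=> x; split => [[h1 h2]|[h1 h2]]; last by split => //; apply: hVsub.
  split => //; case: (hV'' _ h1) => // hle; have := hN2 _ h2; lia.
have hinJ : forall j, inJ G1'' G2 j <-> inJ G1' G2 j.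
  move=> j; rewrite /inJ; split => [[[y hy e] hz]|[[y hy e] hz]]; split => //.
    exists y; first by rewrite -hR.
    by rewrite -e /= hpsi' // b1' // -hR.
  exists y; first by rewrite hR.
  by rewrite -e /= hpsi' // b1'.
have [c1 [c2 c3]] := C.
exists G1''; split.
- by split => //; split => //; exists h.
- split.
    move=> x; rewrite hVV c1; split => -[hx hj]; split.
    + by rewrite hR.
    + by apply/hinJ; rewrite /= hpsi' // b1'.
    + by rewrite -hR.
    + by move/hinJ: hj; rewrite /= hpsi' // b1' // -hR.
  split.
    by move=> x; rewrite hVV c2; split => -[hx hj]; split => //; apply/hinJ.
  move=> x h1 h2; have [h1' _] := proj1 (hVV x) (conj h1 h2).
  by rewrite /= hpsi' // c3.
have hVY' : forall y, (y \in gV G1') = (y \in gL G1' `|` gR G1').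
  move=> y; apply/idP/idP => [hy|]; last exact: wf_LRV w1'.
  have [a ia e] := g3 _ hy; rewrite -e in_fsetU -g6 -?g7 //.
  by rewrite in_fsetU in ia.
have hY : forall y, (y \in gL G1'' `|` gR G1'') = (y \in gL G1' `|` gR G1').
  by move=> y; rewrite !in_fsetU hL hR.
split; first exact: hY.
split.
  move=> u v /=; rewrite (torso_full _ _ w1' hVY').
  have key : forall a b, a \in gL G1 `|` gR G1 -> b \in gL G1 `|` gR G1 ->
     torso_adj G1'' (gL G1'' `|` gR G1'') (g a) (g b) <-> gE G1' (g a) (g b).
    move=> a b ia ib.
    have -> : g a = h a by rewrite /h ia.
    have -> : g b = h b by rewrite /h ib.
    rewrite -(torso_iso w1 w1'' hf) ?(wf_LRV w1 ia) ?(wf_LRV w1 ib) //.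
    rewrite /h ia ib -g4 //.
  split => H.
  + have [hu [hv _]] := H; move: hu hv; rewrite !hY -!hVY'.
    move=> /g3 [a ia ea] /g3 [b ib eb]; subst u v; exact/key.
  + have [hu hv] := c1' _ _ H.
    move: H; move: hu hv => /g3 [a ia ea] /g3 [b ib eb]; subst u v => H; exact/key.
split.
  by move=> y /=; rewrite hY -hVY' => /hpsi'.
by split => y /=; [apply: hL | apply: hR].
Qed.

Definition good k (I : iclass) := (forall G G', I G -> iso k G G' -> I G') /\ (forall G, I G -> wf k G).

Lemma abs_abs_iso k G' G : wf k G' -> iso k (abstraction G') G ->
  iso k (abstraction G') (abstraction G).
Proof.
move=> w' h2; apply: iso_trans (abs_iso h2).
apply: eqg_iso (eqg_sym (abstraction_idem w')) (wf_abstraction w').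
Qed.

Lemma A_props k A : in_A k A ->
  [/\ good k A, (forall G, A G -> A (abstraction G)) & abs k A = A].
Proof.
move=> [I0 [G0 w0 eI] eA]; subst.
split.
- split; first by move=> G G' [G'' h1 h2] h3; exists G'' => //; exact: iso_trans h2 h3.
  by move=> G [G'' _ h2]; exact: iso_wf2 h2.
- move=> G [G' h1 h2]; exists G' => //; exact: abs_abs_iso (iso_wf2 h1) h2.
apply: functional_extensionality => H; apply: propositional_extensionality; split.
  move=> [G [G' h1 h2] h3]; exists G' => //.
  exact: iso_trans (abs_abs_iso (iso_wf2 h1) h2) h3.
move=> [G' h1 h2]; have w' := iso_wf2 h1.
exists (abstraction G').
  by exists G' => //; apply: iso_refl; exact: wf_abstraction.
apply: iso_trans h2; apply: eqg_iso (abstraction_idem w') _.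
by do 2 apply: wf_abstraction.
Qed.

Lemma good_oplus k I A : good k I -> good k A -> good k (oplus k I A).
Proof.
move=> _ _; split.
  by move=> G G' [G1 [G2 [i a c h]]] h'; exists G1, G2; split => //; exact: iso_trans h h'.
by move=> G [G1 [G2 [_ _ _ h]]]; exact: iso_wf2 h.
Qed.

Lemma main_step k I A : good k I -> in_A k A ->
  abs k (oplus k I A) = abs k (oplus k (abs k I) A).
Proof.
move=> [Icl Iwf] hA; have [[Acl Awf] Aabs _] := A_props hA.
apply: functional_extensionality => H; apply: propositional_extensionality; split.
  move=> [G [G1 [G2 [i1 a2 C hG]]] hH].
  have w1 := Iwf _ i1; have w2 := Awf _ a2.
  have Ca := compat_abs C w1 w2.
  have wg := wf_glue Ca (wf_abstraction w1) (wf_abstraction w2).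
  exists (glue (abstraction G1) (abstraction G2)).
    exists (abstraction G1), (abstraction G2); split => //.
    - by exists G1 => //; apply: iso_refl; exact: wf_abstraction.
    - exact: Aabs.
    - exact: iso_refl.
  apply: iso_trans _ hH; apply: iso_trans (abs_iso hG).
  exact: eqg_iso (eqg_sym (key_eqg C w1 w2)) (wf_abstraction wg).
move=> [G [G1' [G2 [[G1 i1 hg] a2 C hG]]] hH].
have w1 := Iwf _ i1; have w2 := Awf _ a2; have w1' := iso_wf2 hg.
have [G1'' [h1 C'' e]] := rename_exists w1 hg w2 C.
have w1'' := iso_wf2 h1.
have wg := wf_glue C'' w1'' w2.
exists (glue G1'' G2).
  exists G1'', G2; split => //; first exact: Icl _ _ i1 h1.
  exact: iso_refl.
apply: iso_trans _ hH; apply: iso_trans (abs_iso hG).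
apply: eqg_iso _ (wf_abstraction wg).
apply: eqg_trans (key_eqg C'' w1'' w2) _.
apply: eqg_trans _ (eqg_sym (key_eqg C w1' w2)).
apply: abstraction_eqg.
  exact: wf_glue (compat_abs C'' w1'' w2) (wf_abstraction w1'') (wf_abstraction w2).
exact: glue_eqg e (eqg_refl _).
Qed.

Lemma gen k As : all_letters (in_A k) As -> forall I B, good k I -> abs k I = B ->
  abs k (foldl (oplus k) I As) = foldl (boxplus k) B As.
Proof.
elim: As => [|A As IH] /=; first by move=> _ I B _ ->.
move=> [hA hAs] I B gI eB; apply: IH => //.
  by apply: good_oplus gI _; have [] := A_props hA.
by rewrite /boxplus -eB; exact: main_step.
Qed.

Local Close Scope fset_scope.

(* The word w = A1 A2 ... An is given as A1 :: As (nonempty);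
   products are bracketed from the left. *)
Theorem lemma3p4 (k : nat) (hk : 0 < k) (A1 : iclass) (As : seq iclass)
  (hA : all_letters (in_A k) (A1 :: As)) :
  abs k (foldl (oplus k) A1 As) = foldl (boxplus k) A1 As.
Proof.
have [h1 hs] := hA.
pose proof (A_props h1) as HH. destruct HH as [g1 _ e1].
exact: (gen hs g1 e1).
Qed.
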